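(* Let $\mathcal{X}=\{x\in\mathbb{R}^d:\|x\|_2\le B\}$, $\mathcal{Y}=\{1,\dots,k\}$, $\mathcal{Z}=\mathcal{X}\times\mathcal{Y}$ with metric $d_\mathcal{Z}((x,y),(x',y'))=\|x-x'\|_2+\mathbb{1}_{(y\ne y')}$. Let $\sigma_1,\dots,\sigma_L$ be coordinatewise activations with $\sigma_i$ $\rho_i$-Lipschitz and $\sigma_i(0)=0$, and for $\mathcal{A}=(A_1,\dots,A_L)$, $A_i\in\mathbb{R}^{d_i\times d_{i-1}}$, $d_0=d$, $d_L=k$, let $\mathcal{H}_\mathcal{A}(x)=\sigma_L(A_L\sigma_{L-1}(\cdots\sigma_1(A_1x)\cdots))$. Let $\mathcal{M}(v,y)=v_y-\max_{j\ne y}v_j$ and, for $\gamma>0$, $l_\gamma(r)=0$ if $r<-\gamma$, $1+r/\gamma$ if $r\in[-\gamma,0]$, $1$ if $r>0$. Let $\mathcal{F}=\{(x,y)\mapsto l_\gamma(-\mathcal{M}(\mathcal{H}_\mathcal{A}(x),y)):\|A_i\|_\sigma\le s_i,\|A_i\|_F\le b_i\}$. Let $P_n$ be the empirical distribution of points $(x_1,y_1),\dots,(x_n,y_n)\in\mathcal{Z}$. Then for any $f\in\mathcal{F}$ (with weights $\mathcal{A}$), $\lambda^+_{f,P_n}\le C_4$, where $$C_4:=\max_j\Big\{\frac2\gamma\prod_{i=1}^L\rho_i\|A_i\|_\sigma,\ \frac1\gamma\big(\mathcal{M}(\mathcal{H}_\mathcal{A}(x_j),y_j)+\max\mathcal{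H}_\mathcal{A}(x_j)-\min\mathcal{H}_\mathcal{A}(x_j)\big)\Big\}.$$
   Context: $\max v$ and $\min v$ denote the largest and smallest coordinates of a vector $v$; $\|\cdot\|_\sigma$ and $\|\cdot\|_F$ are the spectral and Frobenius norms. $\psi_{f,P_n}(\lambda):=\mathbb{E}_{z\sim P_n}\big(\sup_{z'\in\mathcal{Z}}\{f(z')-\lambda d_\mathcal{Z}(z,z')-f(z)\}\big)$ and $\lambda^+_{f,P_n}:=\inf\{\lambda:\psi_{f,P_n}(\lambda)=0\}$. *)

(* Defs.v *)
From HB Require Import structures.
From mathcomp Require Import all_boot all_order all_algebra.
From mathcomp Require Import all_classical all_reals ereal.
Set Implicit Arguments. Unset Strict Implicit. Unset Printing Implicit Defensive.
Import Order.TTheory GRing.Theory Num.Theory.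
Local Open Scope classical_set_scope.
Local Open Scope ring_scope.

Section Defs.
Variable R : realType.

Definition norm2 {m : nat} (v : 'cV[R]_m) : R := Num.sqrt (\sum_i (v i 0) ^+ 2).

Definition frob_norm {m n : nat} (A : 'M[R]_(m, n)) : R :=
  Num.sqrt (\sum_i \sum_j (A i j) ^+ 2).

Definition spec_norm {m n : nat} (A : 'M[R]_(m, n)) : R :=
  sup [set norm2 (A *m x) | x in [set x : 'cV[R]_n | norm2 x <= 1]].

Definition vmax {m : nat} (v : 'cV[R]_m) : R := sup [set v i 0 | i in [set: 'I_m]].
Definition vmin {m : nat} (v : 'cV[R]_m) : R := inf [set v i 0 | i in [set: 'I_m]].

Definition margin {m : nat} (v : 'cV[R]_m) (y : 'I_m) : R :=
  v y 0 - sup [set v j 0 | j in [set j : 'I_m | j != y]].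

Definition ramp (gamma r : R) : R :=
  if r < - gamma then 0 else if r <= 0 then 1 + r / gamma else 1.

(* network: layer i (0-based) is x |-> sigma i (A i x); A i : d_{i+1} x d_i *)
Fixpoint net (dims : nat -> nat) (A : forall i, 'M[R]_(dims i.+1, dims i))
  (sigma : nat -> R -> R) (n : nat) (x : 'cV[R]_(dims 0%N)) : 'cV[R]_(dims n) :=
  match n return 'cV[R]_(dims n) with
  | 0%N => x
  | n'.+1 => map_mx (sigma n') (A n' *m net A sigma n' x)
  end.

Definition dZ {d k : nat} (z z' : 'cV[R]_d * 'I_k) : R :=
  norm2 (z.1 - z'.1) + (z.2 != z'.2)%:R.

Definition Zset {d k : nat} (B : R) : set ('cV[R]_d * 'I_k) :=
  [set z | norm2 z.1 <= B].

Definition psi {d k n : nat} (B : R) (f : 'cV[R]_d * 'I_k -> R)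
  (pts : 'I_n -> 'cV[R]_d * 'I_k) (lam : R) : R :=
  n%:R^-1 * \sum_(j < n)
    sup [set f z' - lam * dZ (pts j) z' - f (pts j) | z' in Zset B].

Definition lam_plus {d k n : nat} (B : R) (f : 'cV[R]_d * 'I_k -> R)
  (pts : 'I_n -> 'cV[R]_d * 'I_k) : \bar R :=
  ereal_inf [set (l%:E)%E | l in [set l | psi B f pts l = 0]].

End Defs.

(* Main.v *)
Require Import Defs.
From HB Require Import structures.
From mathcomp Require Import all_boot all_order all_algebra.
From mathcomp Require Import all_classical all_reals ereal.
From mathcomp Require Import ring lra.
Import Order.TTheory GRing.Theory Num.Theory.
Local Open Scope classical_set_scope.
Local Open Scope ring_scope.

Section H.
Variable R : realType.

Lemma fin_le_sumabs (T : finType) (g : T -> R) j : g j <= \sum_i `|g i|.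
Proof.
rewrite (bigD1 j) //= (le_trans (ler_norm _)) // lerDl sumr_ge0 // => i _.
Qed.

Lemma fin_has_ub (T : finType) (P : set T) (g : T -> R) :
  has_ubound [set g j | j in P].
Proof. exists (\sum_i `|g i|) => _ [j _ <-]; exact: fin_le_sumabs. Qed.

Lemma fin_has_lb (T : finType) (P : set T) (g : T -> R) :
  has_lbound [set g j | j in P].
Proof.
exists (- \sum_i `|g i|) => _ [j _ <-].
rewrite lerNl; have := fin_le_sumabs _ (fun i => - g i) j.
by under eq_bigr do rewrite normrN.
Qed.

Lemma fin_le_sup (T : finType) (P : set T) (g : T -> R) j :
  P j -> g j <= sup [set g j | j in P].
Proof. by move=> Pj; apply: ub_le_sup; [exact: fin_has_ub| exists j]. Qed.

Lemma fin_inf_le (T : finType) (P : set T) (g : T -> R) j :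
  P j -> inf [set g j | j in P] <= g j.
Proof. by move=> Pj; apply: ge_inf; [exact: fin_has_lb| exists j]. Qed.

Lemma fin_sup_le (T : finType) (P : set T) (g : T -> R) c :
  (exists j, P j) -> (forall j, P j -> g j <= c) -> sup [set g j | j in P] <= c.
Proof.
move=> [j Pj] H; apply: ge_sup; first by exists (g j), j.
by move=> _ [i Pi <-]; exact: H.
Qed.

Lemma exists_neq m (y : 'I_m) : (1 < m)%N -> exists j : 'I_m, j != y.
Proof.
case: m y => [|[|m]] y //= _.
case: (eqVneq y ord0) => [->|ne]; last by exists ord0; rewrite eq_sym.
by exists ord_max.
Qed.

Lemma ramp_lip (g a b c : R) : 0 < g -> 0 <= c -> a - b <= c ->
  ramp g a - ramp g b <= c / g.
Proof.
move=> g0 c0 abc; rewrite /ramp.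
have gi : g * g^-1 = 1 by rewrite mulfV // gt_eqF.
have gi0 : 0 < g^-1 by rewrite invr_gt0.
move: gi gi0; set t := g^-1 => gi gi0.
case: (ltP a (-g)) => Ha1; case: (leP a 0) => Ha2;
case: (ltP b (-g)) => Hb1; case: (leP b 0) => Hb2; rewrite /=; nra.
Qed.


Lemma norm2_ge0 m (v : 'cV[R]_m) : 0 <= norm2 v.
Proof. exact: sqrtr_ge0. Qed.

Lemma norm2_coord m (v : 'cV[R]_m) i : `|v i 0| <= norm2 v.
Proof.
rewrite -sqrtr_sqr /norm2 ler_wsqrtr // (bigD1 i) //= lerDl.
by apply: sumr_ge0 => j _; rewrite sqr_ge0.
Qed.

Lemma norm2_scale m (v : 'cV[R]_m) c : norm2 (c *: v) = `|c| * norm2 v.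
Proof.
rewrite /norm2 -sqrtr_sqr -sqrtrM ?sqr_ge0 // mulr_sumr; congr Num.sqrt.
by apply: eq_bigr => i _; rewrite mxE exprMn.
Qed.

Lemma norm2_eq0 m (v : 'cV[R]_m) : norm2 v = 0 -> v = 0.
Proof.
move=> h; apply/matrixP => i j; rewrite (ord1 j) mxE.
by apply/normr0_eq0/le_anti; rewrite normr_ge0 andbT -h norm2_coord.
Qed.

Lemma norm2_0 m : norm2 (0 : 'cV[R]_m) = 0.
Proof. by rewrite /norm2 big1 ?sqrtr0 // => i _; rewrite mxE expr0n. Qed.

Lemma norm2_map_lip m (f : R -> R) (r : R) (a b : 'cV[R]_m) : 0 <= r ->
  (forall u v, `|f u - f v| <= r * `|u - v|) ->
  norm2 (map_mx f a - map_mx f b) <= r * norm2 (a - b).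
Proof.
move=> r0 hf; rewrite /norm2 -(ger0_norm r0) -sqrtr_sqr -sqrtrM ?sqr_ge0 //.
rewrite ler_wsqrtr // mulr_sumr; apply: ler_sum => i _; rewrite !mxE.
have h := hf (a i 0) (b i 0).
have e1 := real_normK (num_real (f (a i 0) - f (b i 0))).
have e2 := real_normK (num_real (a i 0 - b i 0)).
have p1 := normr_ge0 (f (a i 0) - f (b i 0)).
have p2 := normr_ge0 (a i 0 - b i 0).
nra.
Qed.


Lemma spec_has_ub m k (A : 'M[R]_(m, k)) :
  has_ubound [set norm2 (A *m x) | x in [set x : 'cV[R]_k | norm2 x <= 1]].
Proof.
exists (Num.sqrt (\sum_i (\sum_j `|A i j|) ^+ 2)) => _ [x /= hx <-].
rewrite /norm2 ler_wsqrtr // ; apply: ler_sum => i _; rewrite mxE.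
have h : `|\sum_j A i j * x j 0| <= \sum_j `|A i j|.
  apply: le_trans (ler_norm_sum _ _ _) _; apply: ler_sum => j _.
  rewrite normrM; have := le_trans (norm2_coord _ x j) hx.
  have := normr_ge0 (A i j); have := normr_ge0 (x j 0); nra.
have e1 := real_normK (num_real (\sum_j A i j * x j 0)).
have p1 := normr_ge0 (\sum_j A i j * x j 0); nra.
Qed.

Lemma spec_ge0 m k (A : 'M[R]_(m, k)) : 0 <= spec_norm A.
Proof.
apply: ub_le_sup; first exact: spec_has_ub.
exists 0; last by rewrite mulmx0 norm2_0.
by rewrite /= norm2_0.
Qed.

Lemma spec_bound m k (A : 'M[R]_(m, k)) w :
  norm2 (A *m w) <= spec_norm A * norm2 w.
Proof.
have [/norm2_eq0 ->|] := eqVneq (norm2 w) 0.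
  by rewrite mulmx0 !norm2_0 mulr0.
move=> nz; have nw0 : 0 < norm2 w by rewrite lt_def nz norm2_ge0.
set nw := norm2 w in nz nw0 *.
have gi : nw * nw^-1 = 1 by rewrite mulfV.
have gi0 : 0 < nw^-1 by rewrite invr_gt0.
have h : norm2 (A *m (nw^-1 *: w)) <= spec_norm A.
  apply: ub_le_sup; first exact: spec_has_ub.
  exists (nw^-1 *: w) => //=.
  rewrite norm2_scale ger0_norm; last exact: ltW. by rewrite mulrC gi.
move: h; rewrite -scalemxAr norm2_scale ger0_norm; last exact: ltW.
have := norm2_ge0 _ (A *m w); nra.
Qed.

End H.
Arguments norm2_map_lip {R m f r a b}.
Arguments spec_ge0 {R m k}.
Arguments spec_bound {R m k}.
Arguments norm2_ge0 {R m}.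
Arguments norm2_coord {R m}.
Arguments norm2_0 {R m}.

Lemma rho_ge0 (R : realType) (f : R -> R) r :
  (forall u v, `|f u - f v| <= r * `|u - v|) -> 0 <= r.
Proof.
move=> h; have := h 1 0; rewrite subr0 normr1 mulr1.
exact: le_trans (normr_ge0 _).
Qed.
Arguments rho_ge0 {R f r}.

Lemma net_lip (R : realType) dims (A : forall i, 'M[R]_(dims i.+1, dims i))
  sigma rho L :
  (forall i, (i < L)%N -> forall u v, `|sigma i u - sigma i v| <= rho i * `|u - v|) ->
  forall k, (k <= L)%N -> forall x x',
  norm2 (net A sigma k x - net A sigma k x') <=
    (\prod_(i < k) (rho i * spec_norm (A i))) * norm2 (x - x').
Proof.
move=> hs; elim=> [|k IH] hk x x'; first by rewrite big_ord0 mul1r.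
have hkL : (k < L)%N by [].
have r0 := rho_ge0 (hs k hkL).
rewrite big_ord_recr /=.
apply: le_trans (norm2_map_lip r0 (hs k hkL)) _.
rewrite -mulmxBr.
have s0 := spec_ge0 (A k).
have h1 := spec_bound (A k) (net A sigma k x - net A sigma k x').
have h2 := IH (ltnW hk) x x'.
have p0 : 0 <= \prod_(i < k) (rho i * spec_norm (A i)).
  apply: prodr_ge0 => i _; apply: mulr_ge0; last exact: spec_ge0.
  exact: rho_ge0 (hs i (ltn_trans (ltn_ord i) hk)).
apply: le_trans (ler_wpM2l r0 (le_trans h1 (ler_wpM2l s0 h2))) _.
by rewrite le_eqVlt; apply/orP; left; apply/eqP; ring.
Qed.

Arguments fin_le_sup {R T P g}.
Arguments fin_inf_le {R T P g}.
Arguments fin_sup_le {R T P g}.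

Lemma margin_lip (R : realType) m (v v' : 'cV[R]_m) (y : 'I_m) : (1 < m)%N ->
  margin v y - margin v' y <= 2 * norm2 (v - v').
Proof.
move=> m1; rewrite /margin.
have hc : forall j, `|v j 0 - v' j 0| <= norm2 (v - v').
  by move=> j; have := norm2_coord (v - v') j; rewrite !mxE.
have h1 : sup [set v' j 0 | j in [set j : 'I_m | j != y]] <=
   sup [set v j 0 | j in [set j : 'I_m | j != y]] + norm2 (v - v').
  apply: (@fin_sup_le _ _ _ (fun j => v' j 0)).
    by have [j hj] := exists_neq _ y m1; exists j.
  move=> j hj; have := fin_le_sup (g := fun j => v j 0) j hj.
  have := hc j; rewrite ler_norml => /andP[? ?]; lra.
have := hc y; rewrite ler_norml => /andP[? ?]; lra.
Qed.

Lemma margin_lb (R : realType) m (v : 'cV[R]_m) (y : 'I_m) : (1 < m)%N ->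
  - margin v y <= vmax v - vmin v.
Proof.
move=> m1; rewrite /margin /vmax /vmin.
have h1 := fin_inf_le (P := [set: 'I_m]) (g := fun j => v j 0) y I.
have h2 : sup [set v j 0 | j in [set j : 'I_m | j != y]] <=
   sup [set v j 0 | j in [set: 'I_m]].
  apply: (@fin_sup_le _ _ _ (fun j => v j 0)).
    by have [j hj] := exists_neq _ y m1; exists j.
  by move=> j _; exact: (fin_le_sup (P := [set: 'I_m]) (g := fun j => v j 0) j I).
lra.
Qed.

Theorem lemmaC2 (R : realType) (dims : nat -> nat) (L : nat) (B gamma : R)
  (sigma : nat -> R -> R) (rho s b : nat -> R)
  (A : forall i : nat, 'M[R]_(dims i.+1, dims i))
  (n : nat) (pts : 'I_n -> 'cV[R]_(dims 0%N) * 'I_(dims L)) :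
  (1 < dims L)%N ->
  0 < gamma ->
  (forall i, (i < L)%N -> forall u v, `|sigma i u - sigma i v| <= rho i * `|u - v|) ->
  (forall i, (i < L)%N -> sigma i 0 = 0) ->
  (forall i, (i < L)%N -> spec_norm (A i) <= s i /\ frob_norm (A i) <= b i) ->
  (0 < n)%N ->
  (forall j, norm2 (pts j).1 <= B) ->
  let H := net A sigma L in
  let f := fun z : 'cV[R]_(dims 0%N) * 'I_(dims L) =>
             ramp gamma (- margin (H z.1) z.2) in
  let C4 := sup [set Num.max
                   (2 / gamma * \prod_(i < L) (rho i * spec_norm (A i)))
                   (gamma^-1 * (margin (H (pts j).1) (pts j).2
                                + vmax (H (pts j).1) - vmin (H (pts j).1)))
                 | j in [set: 'I_n]] in
  (lam_plus B f pts <= C4%:E)%E.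
Proof.
move=> m1 g0 hs _ _ n0 hB; cbv zeta.
set H := net A sigma L.
set f := fun z : 'cV[R]_(dims 0%N) * 'I_(dims L) => ramp gamma (- margin (H z.1) z.2).
set C4 := sup _.
set K := \prod_(i < L) (rho i * spec_norm (A i)).
have K0 : 0 <= K.
  apply: prodr_ge0 => i _; apply: mulr_ge0; last exact: spec_ge0.
  exact: rho_ge0 (hs i (ltn_ord i)).
have hC j : Num.max (2 / gamma * K)
     (gamma^-1 * (margin (H (pts j).1) (pts j).2
        + vmax (H (pts j).1) - vmin (H (pts j).1))) <= C4.
  exact: (fin_le_sup (P := [set: 'I_n]) (g := fun j => Num.max (2 / gamma * K)
     (gamma^-1 * (margin (H (pts j).1) (pts j).2
        + vmax (H (pts j).1) - vmin (H (pts j).1)))) j I).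
have gi0 : 0 < gamma^-1 by rewrite invr_gt0.
have hC1 : 2 / gamma * K <= C4.
  by apply: le_trans (hC (Ordinal n0)); rewrite le_max lexx.
have hC2 j : gamma^-1 * (margin (H (pts j).1) (pts j).2
        + vmax (H (pts j).1) - vmin (H (pts j).1)) <= C4.
  by apply: le_trans (hC j); rewrite le_max lexx orbT.
have C40 : 0 <= C4.
  apply: le_trans hC1; apply: mulr_ge0 => //; apply: mulr_ge0 => //; exact: ltW.
have hHlip x x' : norm2 (H x - H x') <= K * norm2 (x - x').
  exact: (@net_lip R dims A sigma rho L hs L (leqnn L) x x').
have hf_same x x' y : f (x', y) - f (x, y) <= C4 * norm2 (x - x').
  rewrite /f /=.
  have e0 := norm2_ge0 (x - x').
  apply: le_trans (@ramp_lip R gamma _ _ (2 * K * norm2 (x - x')) g0 _ _) _.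
  - by apply: mulr_ge0 => //; apply: mulr_ge0.
  - have := @margin_lip R _ (H x) (H x') y m1; have := hHlip x x'.
    rewrite -mulrA; have := norm2_ge0 (H x - H x'); nra.
  - have -> : 2 * K * norm2 (x - x') / gamma = (2 / gamma * K) * norm2 (x - x')
      by ring.
    nra.
have hf_lab j y' : f ((pts j).1, y') - f (pts j) <= C4.
  rewrite /f /=.
  set v := H (pts j).1; set y := (pts j).2.
  have hl1 := @margin_lb R _ v y m1; have hl2 := @margin_lb R _ v y' m1.
  apply: le_trans (@ramp_lip R gamma _ _ (margin v y + vmax v - vmin v) g0 _ _) _.
  - lra.
  - lra.
  - by rewrite mulrC; apply: hC2.
have psi0 : psi B f pts C4 = 0.
  rewrite /psi big1 ?mulr0 // => j _.
  set S := [set _ | _ in _].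
  have ub : ubound S 0.
    move=> _ [[x' y'] hz <-]; rewrite /dZ /=.
    have h1 := hf_same (pts j).1 x' y'.
    have e0 := norm2_ge0 ((pts j).1 - x').
    case: (eqVneq (pts j).2 y') => [eqy|ney].
      rewrite -eqy ?eqxx /= ?addr0.
      have e : ((pts j).1, (pts j).2) = pts j by case: (pts j).
      rewrite -eqy e in h1; lra.
    rewrite /=.
    have h2 := hf_lab j y'.
    have : 0 <= C4 * norm2 ((pts j).1 - x') by apply: mulr_ge0.
    lra.
  have S0 : S 0.
    exists (pts j); first exact: hB.
    by rewrite /dZ subrr norm2_0 eqxx /= addr0 mulr0 subr0 subrr.
  apply: le_anti; rewrite ge_sup //=; last by exists 0.
  by apply: ub_le_sup => //; exists 0.
rewrite /lam_plus; apply: ereal_inf_lbound; exists C4 => //.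
Qed.
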